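(* Let $G$ be a finite connected graph and $r\in\mathbb{N}$. Then the group $\mathcal{D}_r$ of deck transformations of the $r$-local covering $p_r:G_r\to G$ is finitely presented.
   Context: Graphs may have loops and parallel edges and are viewed as 1-complexes; a cycle may be a loop or a pair of parallel edges. A closed walk once around a cycle $O$ is a closed walk in $O$ traversing every edge of $O$ exactly once. For a vertex $x_0$, $\pi_1^r(G,x_0)$ is the subgroup of $\pi_1(G,x_0)$ generated by the classes of all closed walks $W_0QW_0^-$, where $W_0$ is a walk from $x_0$ to a vertex $y$, $Q$ a closed walk at $y$ once around a cycle of length at most $r$, and $W_0^-$ the reverse of $W_0$; it is normal. The $r$-local covering $p_r:G_r\to G$ is the connected normal covering with characteristic subgroup $\pi_1^r(G,x_0)$; its deck group is $\mathcal{D}_r\cong\pi_1(G,x_0)/\pi_1^r(G,x_0)$. *)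

(* Defs.v *)
(* Finite multigraphs with loops as 1-complexes,
   walks as sequences of darts, the r-local deck group described as
   pi_1(G,x0)/pi_1^r(G,x0) (combinatorially: closed walks at x0 modulo
   backtracking and insertion/deletion of closed walks once around cycles of
   length <= r), and finite presentability via words modulo a finite set of
   relators. *)
From mathcomp Require Import all_boot.
From Stdlib Require Import Relations.

Set Implicit Arguments.
Unset Strict Implicit.
Unset Printing Implicit Defensive.

Section Graphs.
Variables (V E : finType) (ends : E -> V * V).

Definition dart := (E * bool)%type.
Definition dtail (d : dart) : V := if d.2 then (ends d.1).1 else (ends d.1).2.
Definition dhead (d : dart) : V := if d.2 then (ends d.1).2 else (ends d.1).1.
Definition drev (d : dart) : dart := (d.1, ~~ d.2).

Fixpoint is_walk (x : V) (w : seq dart) (y : V) : bool :=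
  match w with
  | [::] => x == y
  | d :: w' => (dtail d == x) && is_walk (dhead d) w' y
  end.

Definition connected_graph : Prop := forall x y : V, exists w, is_walk x w y.

Definition backtrack (q : seq dart) : Prop := exists d, q = [:: d; drev d].

(* q is a closed walk once around a cycle of length at most r: a nonempty
   closed walk with pairwise distinct vertices (tails) and pairwise distinct
   edges (covers loops, pairs of parallel edges, and longer cycles) *)
Definition once_around_short (r : nat) (q : seq dart) : Prop :=
  exists y, [/\ is_walk y q y, 0 < size q <= r,
                uniq (map dtail q) & uniq (map fst q)].

Definition deck_step (x0 : V) (r : nat) (w w' : seq dart) : Prop :=
  is_walk x0 w x0 /\
  exists w1 q w2, [/\ w = w1 ++ q ++ w2, w' = w1 ++ w2 &
                      backtrack q \/ once_around_short r q].

(* equality in pi_1(G,x0)/pi_1^r(G,x0) *)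
Definition deck_eqv (x0 : V) (r : nat) : relation (seq dart) :=
  clos_refl_sym_trans _ (deck_step x0 r).

End Graphs.

(* words in a free group on S: letters (s, true) = s, (s, false) = s^-1 *)
Definition linv (S : finType) (a : S * bool) : S * bool := (a.1, ~~ a.2).

Definition pres_step (S : finType) (R : seq (seq (S * bool)))
    (u u' : seq (S * bool)) : Prop :=
  exists u1 q u2, [/\ u = u1 ++ q ++ u2, u' = u1 ++ u2 &
                      (exists a, q = [:: a; linv a]) \/ q \in R].

Definition pres_eqv (S : finType) (R : seq (seq (S * bool))) :
  relation (seq (S * bool)) := clos_refl_sym_trans _ (pres_step R).

(* A group given as a setoid (carrier P, equality eqv, multiplication mul)
   is finitely presented: it is isomorphic to < S | R > with S, R finite,
   via a map f on words that is a homomorphism, well defined and injective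
   on classes, and surjective. *)
Definition finitely_presented (T : Type) (P : T -> Prop) (eqv : relation T)
    (mul : T -> T -> T) : Prop :=
  exists (S : finType) (R : seq (seq (S * bool))) (f : seq (S * bool) -> T),
    [/\ forall u, P (f u),
        forall u v, eqv (f (u ++ v)) (mul (f u) (f v)),
        forall u v, pres_eqv R u v <-> eqv (f u) (f v)
      & forall t, P t -> exists u, eqv (f u) t].

(* Main.v *)
Require Import Defs.
From mathcomp Require Import all_boot.
From Stdlib Require Import Relations.

Set Implicit Arguments.
Unset Strict Implicit.
Unset Printing Implicit Defensive.

Section Proof.
Variables (V E : finType) (ends : E -> V * V) (r : nat) (x0 : V).

Local Notation D := (dart E).
Local Notation walk := (is_walk ends).
Local Notation dt := (dtail ends).
Local Notation dh := (dhead ends).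

Definition revd (p : seq D) : seq D := rev (map (@drev E) p).

Lemma drevK (d : D) : drev (drev d) = d.
Proof. by case: d => e b; rewrite /drev /= negbK. Qed.

Lemma revdK p : revd (revd p) = p.
Proof. by rewrite /revd map_rev revK -map_comp (eq_map (@drevK)) map_id. Qed.

Lemma revd_cat a b : revd (a ++ b) = revd b ++ revd a.
Proof. by rewrite /revd map_cat rev_cat. Qed.

Lemma revd_cons d a : revd (d :: a) = revd a ++ [:: drev d].
Proof. by rewrite /revd /= rev_cons cats1. Qed.

Lemma dt_drev d : dt (drev d) = dh d.
Proof. by case: d => e [] . Qed.
Lemma dh_drev d : dh (drev d) = dt d.
Proof. by case: d => e [] . Qed.

Lemma walk_cat x a b z :
  walk x (a ++ b) z = walk x a (last x (map dh a)) && walk (last x (map dh a)) b z.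
Proof.
elim: a x => [|d a IH] x /=; first by rewrite eqxx.
by rewrite IH andbA.
Qed.

Lemma walk_end x w y : walk x w y -> y = last x (map dh w).
Proof.
elim: w x => [|d w IH] x /=; first by move/eqP.
by case/andP=> _ /IH.
Qed.

Lemma walk_catP x a y b z : walk x a y -> walk y b z -> walk x (a ++ b) z.
Proof.
elim: a x => [|d a IH] x /=; first by move/eqP->.
by case/andP=> -> /IH H /H.
Qed.

Lemma walk_revd x w y : walk x w y -> walk y (revd w) x.
Proof.
elim: w x => [|d w IH] x /=; first by move/eqP->; rewrite /= eqxx.
case/andP=> /eqP <- /IH H; rewrite revd_cons; apply: (walk_catP H).
by rewrite /= dt_drev dh_drev !eqxx.
Qed.

Definition rstep (w w' : seq D) : Prop :=
  exists w1 q w2, [/\ w = w1 ++ q ++ w2, w' = w1 ++ w2 &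
                      backtrack q \/ once_around_short ends r q].

Definition red := clos_refl_trans _ rstep.

Lemma red_ctx A B X Y : red X Y -> red (A ++ X ++ B) (A ++ Y ++ B).
Proof.
elim=> [u v [w1 [q [w2 [-> -> H]]]]| u | u v w _ H1 _ H2].
- apply: rt_step; exists (A ++ w1), q, (w2 ++ B); split => //.
  + by rewrite !catA.
  + by rewrite !catA.
- exact: rt_refl.
- exact: rt_trans H1 H2.
Qed.

Lemma red_kill A B X : red X [::] -> red (A ++ X ++ B) (A ++ B).
Proof. by move/(red_ctx A B). Qed.

Lemma red_bt d : red [:: d; drev d] [::].
Proof.
apply: rt_step; exists [::], [:: d; drev d], [::]; split => //.
by left; exists d.
Qed.

Lemma red_cancel X : red (X ++ revd X) [::].
Proof.
elim: X => [|d X IH]; first exact: rt_refl.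
rewrite revd_cons.
have -> : (d :: X) ++ revd X ++ [:: drev d] = [:: d] ++ (X ++ revd X) ++ [:: drev d].
  by rewrite /= catA.
apply: rt_trans (red_ctx _ _ IH) _; exact: red_bt.
Qed.

Lemma red_cancel' X : red (revd X ++ X) [::].
Proof. by have := red_cancel (revd X); rewrite revdK. Qed.

Lemma closed_q q : backtrack q \/ once_around_short ends r q ->
  forall a b, walk a q b -> a = b.
Proof.
case=> [[d ->]|[y [Hy Hs _ _]]] a b /=.
  by rewrite dt_drev dh_drev => /and3P [/eqP <- _ /eqP <-].
case: q Hy Hs => [//|d q] Hy _ Hab.
have := walk_end Hab; have := walk_end Hy; move: Hab Hy => /= /andP[/eqP -> _] /andP[/eqP -> _].
by move=> -> ->.
Qed.

Lemma step_walk x w w' z : rstep w w' -> walk x w z -> walk x w' z.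
Proof.
case=> [w1 [q [w2 [-> -> Hq]]]].
rewrite walk_cat => /andP[H1]; rewrite walk_cat => /andP[H2 H3].
have E1 := closed_q Hq H2.
by apply: (walk_catP H1); rewrite E1.
Qed.

Lemma red_walk x w w' z : red w w' -> walk x w z -> walk x w' z.
Proof.
elim=> [u v H| u | u v c _ H1 _ H2] //; first exact: step_walk.
by move/H1/H2.
Qed.

Lemma red_eqv w w' : red w w' -> walk x0 w x0 -> deck_eqv ends x0 r w w'.
Proof.
elim=> [u v H| u | u v c Hr H1 _ H2] Hw.
- by apply: rst_step; split.
- exact: rst_refl.
- apply: rst_trans (H1 Hw) (H2 _); exact: red_walk Hr Hw.
Qed.

Variable p : V -> seq D.
Hypothesis hp0 : p x0 = [::].
Hypothesis hpw : forall v, walk x0 (p v) v.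

Definition loop (d : D) : seq D := p (dt d) ++ d :: revd (p (dh d)).
Definition floop (a : D * bool) : seq D := if a.2 then loop a.1 else loop (drev a.1).
Definition f (u : seq (D * bool)) : seq D := flatten (map floop u).
Definition g (w : seq D) : seq (D * bool) := map (fun d => (d, true)) w.

Lemma loop_drev d : loop (drev d) = revd (loop d).
Proof.
by rewrite /loop revd_cat revd_cons revdK dt_drev dh_drev -catA.
Qed.

Lemma loop_walk d : walk x0 (loop d) x0.
Proof.
apply: (walk_catP (hpw (dt d))); rewrite /= eqxx /=.
exact: walk_revd.
Qed.

Lemma f_walk u : walk x0 (f u) x0.
Proof.
elim: u => [|[d b] u IH] /=; first by rewrite eqxx.
by apply: walk_catP IH; case: b; apply: loop_walk.
Qed.

Lemma fcat u v : f (u ++ v) = f u ++ f v.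
Proof. by rewrite /f map_cat flatten_cat. Qed.

Lemma L1 x w y : walk x w y -> red (revd (p x) ++ f (g w)) (w ++ revd (p y)).
Proof.
elim: w x => [|d w IH] x /=.
  by move/eqP->; rewrite cats0; apply: rt_refl.
case/andP=> /eqP <- /IH H.
have -> : f ((d, true) :: g w) = loop d ++ f (g w) by [].
rewrite /loop -catA catA.
apply: rt_trans (red_kill [::] _ (red_cancel' _)) _.
rewrite /=.
by have := red_ctx [:: d] [::] H; rewrite !cats0 /=.
Qed.

Lemma L2 x d w y : walk x (d :: w) y ->
  red (f (g (d :: w))) (p x ++ (d :: w) ++ revd (p y)).
Proof.
move=> /= /andP[/eqP <- /L1 H].
have -> : f (g (d :: w)) = loop d ++ f (g w) by [].
rewrite /loop -catA /=.
have := red_ctx (p (dt d) ++ [:: d]) [::] H; rewrite !cats0 -!catA /=.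
by [].
Qed.

Definition shortb (q : seq D) : bool :=
  [exists y : V, [&& walk y q y, 0 < size q <= r, uniq (map dt q) & uniq (map fst q)]].

Lemma shortbP q : reflect (once_around_short ends r q) (shortb q).
Proof.
apply: (iffP existsP) => [[y /and4P [H1 H2 H3 H4]]|[y [H1 H2 H3 H4]]].
  by exists y; split.
by exists y; apply/and4P; split.
Qed.

Fixpoint words (n : nat) : seq (seq D) :=
  if n is n'.+1 then [::] :: [seq d :: w | d <- enum {: E * bool}, w <- words n']
  else [:: [::]].

Lemma words_mem n q : size q <= n -> q \in words n.
Proof.
elim: n q => [|n IH] [|d q] //=; rewrite ?inE ?eqxx //.
move=> Hs; apply/orP; right.
apply: allpairs_f; first by rewrite mem_enum.
exact: IH.
Qed.

Definition Q : seq (seq D) :=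
  [seq [:: d; drev d] | d <- enum {: E * bool}] ++ [seq p v | v <- enum V]
  ++ filter shortb (words r).

Definition R := map g Q.

Lemma red_short y q : once_around_short ends r q -> red (p y ++ q ++ revd (p y)) [::].
Proof.
move=> Hq; apply: rt_trans (red_cancel (p y)).
apply: rt_step; exists (p y), q, (revd (p y)); split => //; by right.
Qed.

Lemma Qred q : q \in Q -> red (f (g q)) [::].
Proof.
rewrite /Q !mem_cat => /or3P [/mapP [d _ ->]|/mapP [v _ ->]|].
- have Hw : walk (dt d) [:: d; drev d] (dt d) by rewrite /= dt_drev dh_drev !eqxx.
  apply: rt_trans (L2 Hw) _.
  apply: rt_trans (red_kill _ _ (red_bt d)) _; exact: red_cancel.
- case Ep: (p v) => [|d w]; first exact: rt_refl.
  have := hpw v; rewrite Ep => /L2 H; apply: rt_trans H _.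
  by rewrite hp0 -Ep; apply: red_cancel.
- move=> Hin; have /andP[/shortbP Hq _] : shortb q && (q \in words r) by rewrite -mem_filter.
  case: q Hin Hq =>  [|d w] _ Hq; first exact: rt_refl.
  have [y [Hy _ _ _]] := Hq.
  apply: rt_trans (L2 Hy) _; exact: red_short.
Qed.

Local Notation pres := (pres_eqv R).

Lemma pres_ctx A B u v : pres u v -> pres (A ++ u ++ B) (A ++ v ++ B).
Proof.
elim=> [a b [u1 [q [u2 [-> -> H]]]]| a | a b _ H | a b c _ H1 _ H2].
- apply: rst_step; exists (A ++ u1), q, (u2 ++ B); split => //.
  + by rewrite !catA.
  + by rewrite !catA.
- exact: rst_refl.
- exact: rst_sym.
- exact: rst_trans H1 H2.
Qed.

Lemma pres_cat u u' v v' : pres u u' -> pres v v' -> pres (u ++ v) (u' ++ v').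
Proof.
move=> H1 H2; apply: rst_trans (_ : pres (u' ++ v) _).
  by have := pres_ctx [::] v H1.
by have := pres_ctx u' [::] H2; rewrite !cats0.
Qed.

Lemma pres_rel A B q : q \in R -> pres (A ++ q ++ B) (A ++ B).
Proof. by move=> Hq; apply: rst_step; exists A, q, B; split => //; right. Qed.

Lemma pres_relA q B : q \in R -> pres (q ++ B) B.
Proof. by move=> Hq; have := pres_rel [::] B Hq. Qed.

Lemma inR_bt d : g [:: d; drev d] \in R.
Proof. by apply: map_f; rewrite /Q !mem_cat; apply/or3P; constructor 1; apply: map_f; rewrite mem_enum. Qed.

Lemma inR_p v : g (p v) \in R.
Proof. by apply: map_f; rewrite /Q !mem_cat; apply/or3P; constructor 2; apply: map_f; rewrite mem_enum. Qed.

Lemma inR_short q : once_around_short ends r q -> g q \in R.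
Proof.
move=> Hq; apply: map_f; rewrite /Q !mem_cat; apply/or3P; constructor 3.
rewrite mem_filter; apply/andP; split; first exact/shortbP.
by apply: words_mem; case: Hq => y [_ /andP[]].
Qed.

Lemma pres_grev X : pres (g (X ++ revd X)) [::].
Proof.
elim: X => [|d X IH]; first exact: rst_refl.
rewrite revd_cons.
have -> : g ((d :: X) ++ revd X ++ [:: drev d]) =
  [:: (d, true)] ++ g (X ++ revd X) ++ [:: (drev d, true)].
  by rewrite /g /= !map_cat /= catA.
apply: rst_trans (pres_ctx _ _ IH) _.
by have := pres_rel [::] [::] (inR_bt d); rewrite cats0.
Qed.

Lemma pres_p v : pres (g (p v)) [::].
Proof. by have := pres_rel [::] [::] (inR_p v); rewrite !cats0. Qed.

Lemma pres_prev v : pres (g (revd (p v))) [::].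
Proof.
apply: rst_trans (pres_grev (p v)).
apply: rst_sym; rewrite /g map_cat; exact: pres_relA (inR_p v).
Qed.

Lemma pres_loop d : pres (g (loop d)) [:: (d, true)].
Proof.
rewrite /loop /g map_cat -/g.
have -> : [:: (d, true)] = [::] ++ [:: (d, true)] ++ [::] by [].
apply: pres_cat; first exact: pres_p.
rewrite /= -/g; have := pres_ctx [:: (d, true)] [::] (pres_prev (dh d)).
by rewrite !cats0.
Qed.

Lemma pres_floop a : pres (g (floop a)) [:: a].
Proof.
case: a => d [] /=; first exact: pres_loop.
apply: rst_trans (pres_loop (drev d)) _.
apply: rst_sym.
apply: rst_trans (_ : pres _ ([:: (d, false)] ++ g [:: d; drev d] ++ [::])) _.
  by apply: rst_sym; have := pres_rel [:: (d, false)] [::] (inR_bt d).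
apply: rst_step; exists [::], [:: (d, false); (d, true)], [:: (drev d, true)].
split => //; left; by exists (d, false).
Qed.

Lemma pres_gf u : pres (g (f u)) u.
Proof.
elim: u => [|a u IH]; first exact: rst_refl.
have -> : g (f (a :: u)) = g (floop a) ++ g (f u) by rewrite /g /f /= map_cat.
exact: (pres_cat (pres_floop a) IH).
Qed.

Lemma step_pres w w' : deck_step ends x0 r w w' -> pres (g w) (g w').
Proof.
case=> _ [w1 [q [w2 [-> -> Hq]]]].
rewrite /g !map_cat -/g.
case: Hq => [[d ->]|Hq].
  exact: pres_rel (inR_bt d).
exact: pres_rel (inR_short Hq).
Qed.

Lemma eqv_pres w w' : deck_eqv ends x0 r w w' -> pres (g w) (g w').
Proof.
elim=> [a b H | a | a b _ H | a b c _ H1 _ H2].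
- exact: step_pres.
- exact: rst_refl.
- exact: rst_sym.
- exact: rst_trans H1 H2.
Qed.

Lemma floop_linv a : red (floop a ++ floop (linv a)) [::].
Proof.
case: a => d [] /=.
  by rewrite /floop /linv /= loop_drev; apply: red_cancel.
by rewrite /floop /linv /= loop_drev; apply: red_cancel'.
Qed.

Lemma pres_eqv_f u v : pres u v -> deck_eqv ends x0 r (f u) (f v).
Proof.
elim=> [a b [u1 [q [u2 [-> -> H]]]]| a | a b _ H | a b c _ H1 _ H2].
- apply: red_eqv; last exact: f_walk.
  rewrite !fcat; apply: red_kill.
  case: H => [[a0 ->]|/mapP [q' Hq' ->]]; last exact: Qred.
  by rewrite /f /= cats0; apply: floop_linv.
- exact: rst_refl.
- exact: rst_sym.
- exact: rst_trans H1 H2.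
Qed.

Lemma main_fp : finitely_presented (fun w : seq (dart E) => is_walk ends x0 w x0)
                     (deck_eqv ends x0 r) cat.
Proof.
exists (E * bool : finType)%type, R, f; split.
- exact: f_walk.
- by move=> u v; rewrite fcat; apply: rst_refl.
- move=> u v; split; first exact: pres_eqv_f.
  move/eqv_pres => H.
  apply: rst_trans (rst_sym _ _ _ _ (pres_gf u)) _.
  exact: rst_trans H (pres_gf v).
- move=> t Ht; exists (g t).
  case: t Ht => [|d w] Ht; first exact: rst_refl.
  apply: red_eqv; last exact: f_walk.
  by have := L2 Ht; rewrite hp0 /= cats0.
Qed.
End Proof.

Theorem proposition4p8 (V E : finType) (ends : E -> V * V) (r : nat) (x0 : V) :
  connected_graph ends ->
  finitely_presented (fun w : seq (dart E) => is_walk ends x0 w x0)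
                     (deck_eqv ends x0 r) cat.
Proof.
move=> conn.
pose p v := if v == x0 then [::] else xchoose (conn x0 v).
apply: (@main_fp V E ends r x0 p).
- by rewrite /p eqxx.
- move=> v; rewrite /p; case: eqP => [->|_]; first by rewrite /= eqxx.
  exact: (xchooseP (conn x0 v)).
Qed.
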